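(* Let $j^\star=\left\lfloor-\frac{\log(1-\lambda)}{\log(\lambda d+1)}\right\rfloor$, assume $I>j^\star$, and let $x^\star$ be the unique fixed point. Then $\mathcal L_M(x^\star)=\mathcal L_S(x^\star)+\frac1d$ and $$j^\star-\frac1d\le\mathcal L_S(x^\star)\le j^\star-\frac1d+1.$$
   Context: Fix $\lambda\in(0,1)$, an integer $d\ge2$ and an integer $I>1$. $\mathcal S=\{x=(x_{i,j})_{0\le i\le j\le I}: x_{i,j}\ge0,\ \sum_{i=0}^I\sum_{j=i}^I x_{i,j}=1\}$; $x_{i,\cdot}=\sum_{j=i}^I x_{i,j}$, $x_{\cdot,j}=\sum_{i=0}^j x_{i,j}$; $\mathcal L_S(x)=\sum_{i=1}^I i\,x_{i,\cdot}$, $\mathcal L_M(x)=\sum_{j=1}^I j\,x_{\cdot,j}$. For $0\le j\le I$: $\mathcal R_j(x)=\max\{0,\lambda(1-d\sum_{i=0}^j(j+1-i)x_{i,\cdot})\}\,\mathbf 1\{\sum_{i=0}^j x_{\cdot,i}=0\}$, $\mathcal G_j(x)=\lambda d\,\mathbf 1\{\sum_{i=0}^j x_{\cdot,i}=0,\ d\sum_{i=0}^j(j+1-i)x_{i,\cdot}\le1\}\sum_{i=0}^j x_{i,\cdot}$. Write $\rho_k^{a,b}(x)=\mathcal R_k(x)\frac{x_{a,b}}{x_{\cdot,b}}\mathbf 1\{x_{\cdot,b}>0\}$ (equal to $0$ when $x_{\cdot,b}=0$). The drift $b(x)$ is: $b_{0,0}=\lambda d(x_{0,\cdot}-x_{0,0})-\lambda+\mathcal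 R_0(x)$; for $i<j$: $b_{i,j}=x_{i+1,j}-\mathbf 1\{i>0\}x_{i,j}-\lambda d x_{i,j}-\rho_{j-1}^{i,j}+\mathbf 1\{i>0\}\rho_{j-2}^{i-1,j-1}+\mathbf 1\{j=I,i>0\}\rho_{I-1}^{i-1,I}$; $b_{1,1}=-x_{1,1}+\lambda d(x_{1,\cdot}-x_{1,1})+\lambda-\mathcal R_0(x)-\rho_0^{1,1}-\mathcal G_1(x)$; for $2\le i\le I-1$: $b_{i,i}=-x_{i,i}+\lambda d(x_{i,\cdot}-x_{i,i})-\rho_{i-1}^{i,i}+\rho_{i-2}^{i-1,i-1}+\mathcal G_{i-1}(x)-\mathcal G_i(x)$; $b_{I,I}=-x_{I,I}+\rho_{I-2}^{I-1,I-1}+\mathcal G_{I-1}(x)+\rho_{I-1}^{I-1,I}$. A fluid solution is an absolutely continuous $x:\mathbb R_+\to\mathcal S$ with $\dot x_{i,j}(t)=b_{i,j}(x(t))$ for a.e. $t$ and all $i\le j$. A fixed point is a fluid solution with $b(x(t))=0$ for all $t\ge0$ (hence constant, identified with a point of $\mathcal S$). *)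

(* Defs.v *)
From Stdlib Require Import Reals Lra Lia Arith ZArith.
Open Scope R_scope.

(** A state x is a function nat -> nat -> R; only entries x i j with
    0 <= i <= j <= I are meaningful. *)

(** sumR a b f = sum_{k=a}^{b} f k  (0 if b < a). *)
Fixpoint sum_lt (n : nat) (f : nat -> R) : R :=
  match n with
  | O => 0
  | S m => sum_lt m f + f m
  end.
Definition sumR (a b : nat) (f : nat -> R) : R :=
  sum_lt (S b) (fun k => if Nat.leb a k then f k else 0).

Section Model.
Variables (lam : R) (d : nat) (I : nat).
Let dR := INR d.

(** x_{i,.} = sum_{j=i}^I x_{i,j} ;  x_{.,j} = sum_{i=0}^j x_{i,j} *)
Definition rowsum (x : nat -> nat -> R) (i : nat) : R := sumR i I (fun j => x i j).
Definition colsum (x : nat -> nat -> R) (j : nat) : R := sumR 0 j (fun i => x i j).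

Definition inS (x : nat -> nat -> R) : Prop :=
  (forall i j, (i <= j)%nat -> (j <= I)%nat -> 0 <= x i j) /\
  sumR 0 I (fun i => sumR i I (fun j => x i j)) = 1.

Definition LS (x : nat -> nat -> R) : R := sumR 1 I (fun i => INR i * rowsum x i).
Definition LM (x : nat -> nat -> R) : R := sumR 1 I (fun j => INR j * colsum x j).

Definition wsum (x : nat -> nat -> R) (j : nat) : R :=
  sumR 0 j (fun i => (INR j + 1 - INR i) * rowsum x i).

Definition ind (P : Prop) (dec : {P} + {~ P}) : R := if dec then 1 else 0.

Definition Rj (x : nat -> nat -> R) (j : nat) : R :=
  Rmax 0 (lam * (1 - dR * wsum x j)) *
  (if Req_dec_T (sumR 0 j (fun i => colsum x i)) 0 then 1 else 0).

Definition Gj (x : nat -> nat -> R) (j : nat) : R :=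
  lam * dR *
  (if Req_dec_T (sumR 0 j (fun i => colsum x i)) 0
   then (if Rle_dec (dR * wsum x j) 1 then 1 else 0) else 0) *
  sumR 0 j (fun i => rowsum x i).

Definition rho (x : nat -> nat -> R) (k a b : nat) : R :=
  if Rlt_dec 0 (colsum x b) then Rj x k * (x a b / colsum x b) else 0.

(** The drift b_{i,j}(x), for 0 <= i <= j <= I (with I > 1). *)
Definition drift (x : nat -> nat -> R) (i j : nat) : R :=
  if Nat.ltb i j then
    x (S i) j
    - (if Nat.ltb 0 i then x i j else 0)
    - lam * dR * x i j
    - rho x (j - 1) i j
    + (if Nat.ltb 0 i then rho x (j - 2) (i - 1) (j - 1) else 0)
    + (if andb (Nat.eqb j I) (Nat.ltb 0 i) then rho x (I - 1) (i - 1) I else 0)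
  else
  if Nat.eqb i 0 then
    lam * dR * (rowsum x 0 - x 0%nat 0%nat) - lam + Rj x 0
  else if Nat.eqb i I then
    - x I I + rho x (I - 2) (I - 1) (I - 1) + Gj x (I - 1) + rho x (I - 1) (I - 1) I
  else if Nat.eqb i 1 then
    - x 1%nat 1%nat + lam * dR * (rowsum x 1 - x 1%nat 1%nat) + lam - Rj x 0
    - rho x 0 1 1 - Gj x 1
  else
    - x i i + lam * dR * (rowsum x i - x i i) - rho x (i - 1) i i
    + rho x (i - 2) (i - 1) (i - 1) + Gj x (i - 1) - Gj x i.

Definition fixed_point (x : nat -> nat -> R) : Prop :=
  inS x /\ forall i j, (i <= j)%nat -> (j <= I)%nat -> drift x i j = 0.

End Model.

Definition jstar (lam : R) (d : nat) : Z :=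
  Int_part (- ln (1 - lam) / ln (lam * INR d + 1)).

(* Main.v *)
Require Import Defs.
From Stdlib Require Import Reals Lra Lia Arith ZArith Classical.
Open Scope R_scope.

Lemma sl_ext n f g : (forall k, (k < n)%nat -> f k = g k) -> sum_lt n f = sum_lt n g.
Proof. induction n; intros H; simpl; auto. rewrite IHn by (intros; apply H; lia). rewrite H by lia; auto. Qed.

Lemma sl_plus n f g : sum_lt n (fun k => f k + g k) = sum_lt n f + sum_lt n g.
Proof. induction n; simpl; [lra|rewrite IHn; lra]. Qed.

Lemma sl_minus n f g : sum_lt n (fun k => f k - g k) = sum_lt n f - sum_lt n g.
Proof. induction n; simpl; [lra|rewrite IHn; lra]. Qed.

Lemma sl_scal n c f : sum_lt n (fun k => c * f k) = c * sum_lt n f.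
Proof. induction n; simpl; [lra|rewrite IHn; lra]. Qed.

Lemma sl_zero n f : (forall k, (k < n)%nat -> f k = 0) -> sum_lt n f = 0.
Proof. intros H. rewrite (sl_ext n f (fun _ => 0)) by auto. induction n; simpl; [lra| rewrite IHn; [lra|intros; apply H; lia]]. Qed.

Lemma sl_nonneg n f : (forall k, (k < n)%nat -> 0 <= f k) -> 0 <= sum_lt n f.
Proof. induction n; intros H; simpl; [lra|]. pose proof (H n ltac:(lia)). pose proof (IHn ltac:(intros; apply H; lia)). lra. Qed.

Lemma sl_ge_term n f k : (forall k, (k < n)%nat -> 0 <= f k) -> (k < n)%nat -> f k <= sum_lt n f.
Proof. induction n; intros H Hk; simpl; [lia|].
  pose proof (sl_nonneg n f ltac:(intros; apply H; lia)).
  destruct (Nat.eq_dec k n). subst. lra.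
  pose proof (IHn ltac:(intros; apply H; lia) ltac:(lia)). pose proof (H n ltac:(lia)). lra. Qed.

Lemma sl_eq0 n f k : (forall k, (k < n)%nat -> 0 <= f k) -> sum_lt n f = 0 -> (k < n)%nat -> f k = 0.
Proof. intros H Hs Hk. pose proof (sl_ge_term n f k H Hk). pose proof (H k Hk). lra. Qed.

Lemma sl_delta n p c : (p < n)%nat -> sum_lt n (fun k => if Nat.eqb k p then c else 0) = c.
Proof. induction n; intros H; simpl; [lia|].
  destruct (Nat.eq_dec p n). subst. rewrite Nat.eqb_refl.
  rewrite sl_zero. lra. intros k Hk. destruct (Nat.eqb_spec k n); [lia|auto].
  rewrite IHn by lia. destruct (Nat.eqb_spec n p); [lia|lra]. Qed.

Lemma sl_add n k f : sum_lt (n + k) f = sum_lt n f + sum_lt k (fun i => f (n + i)%nat).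
Proof. induction k; simpl. rewrite Nat.add_0_r; lra. rewrite Nat.add_succ_r. simpl. rewrite IHk. lra. Qed.

Lemma sl_const n c : sum_lt n (fun _ => c) = INR n * c.
Proof. induction n; simpl; [lra|]. rewrite IHn. destruct n; simpl; lra. Qed.

Lemma sumR_def a b f : sumR a b f = sum_lt (S b) (fun k => if Nat.leb a k then f k else 0).
Proof. reflexivity. Qed.

Lemma sumR_0 b f : sumR 0 b f = sum_lt (S b) f.
Proof. unfold sumR. apply sl_ext. intros; reflexivity. Qed.

Lemma sumR_low a b f : (forall k, (k < a)%nat -> f k = 0) -> sumR a b f = sum_lt (S b) f.
Proof. intros H. unfold sumR. apply sl_ext. intros k _. destruct (Nat.leb_spec a k); auto. rewrite H; auto. Qed.

Lemma sl_weight n f : sum_lt n (fun i => (INR n - INR i) * f i) = sum_lt n (fun j => sum_lt (S j) f).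
Proof. induction n. reflexivity.
  change (sum_lt (S n) (fun i => (INR (S n) - INR i) * f i)) with (sum_lt n (fun i => (INR (S n) - INR i) * f i) + (INR (S n) - INR n) * f n). rewrite (sl_ext n _ (fun i => (INR n - INR i) * f i + f i)).
  2:{ intros. rewrite S_INR. ring. }
  rewrite sl_plus, IHn. change (sum_lt (S n) (fun j => sum_lt (S j) f)) with (sum_lt n (fun j => sum_lt (S j) f) + sum_lt (S n) f).
  change (sum_lt (S n) f) with (sum_lt n f + f n). rewrite S_INR. ring. Qed.

Lemma drift_off lam d I x i j : (i < j)%nat -> drift lam d I x i j =
    x (S i) j
    - (if Nat.ltb 0 i then x i j else 0)
    - lam * INR d * x i j
    - rho lam d I x (j - 1) i j
    + (if Nat.ltb 0 i then rho lam d I x (j - 2) (i - 1) (j - 1) else 0)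
    + (if andb (Nat.eqb j I) (Nat.ltb 0 i) then rho lam d I x (I - 1) (i - 1) I else 0).
Proof. intros H. unfold drift. destruct (Nat.ltb_spec i j); [reflexivity|lia]. Qed.

Lemma drift_00 lam d I x : drift lam d I x 0 0 = lam * INR d * (rowsum I x 0 - x 0%nat 0%nat) - lam + Rj lam d I x 0.
Proof. reflexivity. Qed.

Lemma drift_II lam d I x : (0 < I)%nat -> drift lam d I x I I =
  - x I I + rho lam d I x (I - 2) (I - 1) (I - 1) + Gj lam d I x (I - 1) + rho lam d I x (I - 1) (I - 1) I.
Proof. intros H. unfold drift. rewrite Nat.ltb_irrefl. destruct (Nat.eqb_spec I 0); [lia|]. rewrite Nat.eqb_refl. reflexivity. Qed.

Lemma drift_11 lam d I x : (1 < I)%nat -> drift lam d I x 1 1 =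
  - x 1%nat 1%nat + lam * INR d * (rowsum I x 1 - x 1%nat 1%nat) + lam - Rj lam d I x 0
    - rho lam d I x 0 1 1 - Gj lam d I x 1.
Proof. intros H. unfold drift. simpl Nat.ltb. simpl Nat.eqb at 1. destruct (Nat.eqb_spec 1 I); [lia|]. reflexivity. Qed.

Lemma drift_ii lam d I x i : (2 <= i)%nat -> (i < I)%nat -> drift lam d I x i i =
  - x i i + lam * INR d * (rowsum I x i - x i i) - rho lam d I x (i - 1) i i
    + rho lam d I x (i - 2) (i - 1) (i - 1) + Gj lam d I x (i - 1) - Gj lam d I x i.
Proof. intros H1 H2. unfold drift. rewrite Nat.ltb_irrefl.
  destruct (Nat.eqb_spec i 0); [lia|]. destruct (Nat.eqb_spec i I); [lia|]. destruct (Nat.eqb_spec i 1); [lia|]. reflexivity. Qed.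

Definition Setup lam d I x m := 0<lam /\ lam<1 /\ (2<=d)%nat /\ (1<I)%nat /\ fixed_point lam d I x /\
  (m <= I)%nat /\ (forall j i, (j<m)%nat -> (i<=j)%nat -> x i j = 0) /\ 0 < colsum x m.

Lemma fp_nonneg lam d I x : fixed_point lam d I x -> forall i j, (i <= j)%nat -> (j <= I)%nat -> 0 <= x i j.
Proof. intros [[H _] _]. exact H. Qed.

Lemma colsum_nonneg lam d I x j : fixed_point lam d I x -> (j <= I)%nat -> 0 <= colsum x j.
Proof. intros H Hj. unfold colsum. rewrite sumR_0. apply sl_nonneg. intros k Hk. apply (fp_nonneg _ _ _ _ H); lia. Qed.

Lemma rowsum_nonneg lam d I x i : fixed_point lam d I x -> 0 <= rowsum I x i.
Proof. intros H. unfold rowsum, sumR. apply sl_nonneg. intros k Hk. destruct (Nat.leb_spec i k); [|lra].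
  apply (fp_nonneg _ _ _ _ H); lia. Qed.

Section S.
Variables (lam : R) (d I : nat) (x : nat -> nat -> R) (m : nat).
Hypothesis HS : Setup lam d I x m.

Lemma S_fp : fixed_point lam d I x. Proof. apply HS. Qed.
Lemma S_lam : 0 < lam. Proof. apply HS. Qed.
Lemma S_lam1 : lam < 1. Proof. apply HS. Qed.
Lemma S_d : (2 <= d)%nat. Proof. apply HS. Qed.
Lemma S_I : (1 < I)%nat. Proof. apply HS. Qed.
Lemma S_mI : (m <= I)%nat. Proof. apply HS. Qed.
Lemma S_colz : forall j i, (j<m)%nat -> (i<=j)%nat -> x i j = 0. Proof. apply HS. Qed.
Lemma S_U : 0 < colsum x m. Proof. apply HS. Qed.
Lemma S_nn : forall i j, (i <= j)%nat -> (j <= I)%nat -> 0 <= x i j.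
Proof. intros; apply (fp_nonneg lam d I x S_fp); auto. Qed.
Lemma S_drift : forall i j, (i <= j)%nat -> (j <= I)%nat -> drift lam d I x i j = 0.
Proof. apply S_fp. Qed.
Lemma S_dpos : 0 < INR d.
Proof. pose proof S_d. apply lt_0_INR; lia. Qed.
Lemma S_a : 0 < lam * INR d.
Proof. pose proof S_lam; pose proof S_dpos. nra. Qed.

Lemma colsum_low j : (j < m)%nat -> colsum x j = 0.
Proof. intros H. unfold colsum. rewrite sumR_0. apply sl_zero. intros k Hk. apply S_colz; lia. Qed.

Lemma cum_low k : (k < m)%nat -> sumR 0 k (fun i => colsum x i) = 0.
Proof. intros H. rewrite sumR_0. apply sl_zero. intros; apply colsum_low; lia. Qed.

Lemma cum_high k : (m <= k)%nat -> (k <= I)%nat -> sumR 0 k (fun i => colsum x i) <> 0.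
Proof. intros H1 H2. rewrite sumR_0. pose proof S_U.
  assert (colsum x m <= sum_lt (S k) (fun i => colsum x i)).
  { apply (sl_ge_term (S k) (fun i => colsum x i) m); [|lia]. intros. apply (colsum_nonneg lam d I); [apply S_fp|lia]. }
  lra. Qed.

Lemma Rj_high k : (m <= k)%nat -> (k <= I)%nat -> Rj lam d I x k = 0.
Proof. intros H1 H2. unfold Rj. destruct (Req_dec_T _ 0) as [e|e]. exfalso; exact (cum_high k H1 H2 e). ring. Qed.

Lemma Gj_high k : (m <= k)%nat -> (k <= I)%nat -> Gj lam d I x k = 0.
Proof. intros H1 H2. unfold Gj. destruct (Req_dec_T _ 0) as [e|e]. exfalso; exact (cum_high k H1 H2 e). ring. Qed.

Lemma rho_high k a b : (m <= k)%nat -> (k <= I)%nat -> rho lam d I x k a b = 0.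
Proof. intros H1 H2. unfold rho. rewrite Rj_high by auto. destruct (Rlt_dec _ _); ring. Qed.

Lemma rho_low k a b : (b < m)%nat -> rho lam d I x k a b = 0.
Proof. intros H. unfold rho. rewrite colsum_low by auto. destruct (Rlt_dec _ _); [lra|ring]. Qed.

Lemma Rj_low k : (k < m)%nat -> Rj lam d I x k = Rmax 0 (lam * (1 - INR d * wsum I x k)).
Proof. intros H. unfold Rj. rewrite cum_low by auto. destruct (Req_dec_T 0 0); [ring|congruence]. Qed.

Lemma Gj_low k : (k < m)%nat -> Gj lam d I x k =
  lam * INR d * (if Rle_dec (INR d * wsum I x k) 1 then 1 else 0) * sumR 0 k (fun i => rowsum I x i).
Proof. intros H. unfold Gj. rewrite cum_low by auto. destruct (Req_dec_T 0 0); [reflexivity|congruence]. Qed.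

Lemma rho_m k a : rho lam d I x k a m = Rj lam d I x k * / colsum x m * x a m.
Proof. unfold rho. pose proof S_U. destruct (Rlt_dec 0 (colsum x m)); [|lra]. unfold Rdiv; ring. Qed.

Lemma Rj_nonneg k : 0 <= Rj lam d I x k.
Proof. unfold Rj. pose proof (Rmax_l 0 (lam * (1 - INR d * wsum I x k))). destruct (Req_dec_T _ _); nra. Qed.

End S.

Section S.
Variables (lam : R) (d I : nat) (x : nat -> nat -> R) (m : nat).
Hypothesis HS : Setup lam d I x m.

Let a := lam * INR d.
Let RS := fun i => rowsum I x i.
Let Sp := fun k => sum_lt (S k) RS.

Lemma wsum_eq k : wsum I x k = sum_lt (S k) (fun j => Sp j).
Proof. unfold wsum. rewrite sumR_0. unfold Sp. rewrite <- (sl_weight (S k) RS). apply sl_ext. intros i _. rewrite S_INR. reflexivity. Qed.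

Lemma wsum_zero_if k : Sp k = 0 -> wsum I x k = 0.
Proof. intros H. unfold wsum. rewrite sumR_0. apply sl_zero. intros i Hi.
  assert (E : RS i = 0). { apply (sl_eq0 (S k) RS i); [|exact H|lia]. intros; apply (rowsum_nonneg lam d I x), (S_fp lam d I x m HS). }
  unfold RS in E. rewrite E. ring. Qed.

Lemma G_to_w k : (k < m)%nat -> Gj lam d I x k = a * Sp k -> INR d * wsum I x k <= 1.
Proof. intros Hk HG. rewrite (Gj_low lam d I x m HS k Hk) in HG. fold a in HG.
  destruct (Rle_dec (INR d * wsum I x k) 1) as [h|h]; auto.
  exfalso. apply h. assert (Sp k = 0). { pose proof (S_a lam d I x m HS). fold a in H. unfold Sp in *. nra. }
  rewrite wsum_zero_if by auto. lra. Qed.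

Lemma chain : forall k, (k < m)%nat -> INR d * wsum I x k <= 1 /\ ((1 <= k)%nat -> Gj lam d I x k = a * Sp k).
Proof.
  pose proof (S_I lam d I x m HS) as HI. pose proof (S_mI lam d I x m HS) as HmI.
  pose proof (S_a lam d I x m HS) as Ha. fold a in Ha.
  assert (W0 : wsum I x 0 = RS 0). { rewrite wsum_eq. simpl. unfold Sp. simpl. ring. }
  assert (B0 : (0 < m)%nat -> INR d * RS 0 <= 1).
  { intros Hm. pose proof (S_drift lam d I x m HS 0 0 ltac:(lia) ltac:(lia)) as D.
    rewrite drift_00, (Rj_low lam d I x m HS 0 Hm), (S_colz lam d I x m HS 0 0 Hm ltac:(lia)), W0 in D.
    destruct (Rle_dec (INR d * RS 0) 1) as [h|h]; auto. exfalso.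
    rewrite Rmax_left in D by (pose proof (S_lam lam d I x m HS); nra). unfold RS in *. fold a in D.
    apply h. right. pose proof (S_lam lam d I x m HS). unfold a in D. nra. }
  induction k as [|k IH]; intros Hk.
  - split; [rewrite W0; auto|lia].
  - destruct IH as [IH1 IH2]; [lia|].
    assert (HG : Gj lam d I x (S k) = a * Sp (S k)).
    { destruct k as [|k].
      + pose proof (S_drift lam d I x m HS 1 1 ltac:(lia) ltac:(lia)) as D.
        rewrite drift_11 in D by lia.
        rewrite (Rj_low lam d I x m HS 0 ltac:(lia)), W0 in D.
        rewrite Rmax_right in D by (pose proof (S_lam lam d I x m HS); specialize (B0 ltac:(lia)); nra).
        rewrite (rho_low lam d I x m HS 0 1 1 ltac:(lia)), (S_colz lam d I x m HS 1 1 ltac:(lia) ltac:(lia)) in D.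
        unfold Sp. simpl. unfold RS in *. fold a in D. unfold a in *. lra.
      + pose proof (S_drift lam d I x m HS (S (S k)) (S (S k)) ltac:(lia) ltac:(lia)) as D.
        rewrite drift_ii in D by lia.
        rewrite (rho_low lam d I x m HS) in D by lia. rewrite (rho_low lam d I x m HS) in D by lia.
        rewrite (S_colz lam d I x m HS (S (S k)) (S (S k)) ltac:(lia) ltac:(lia)) in D.
        replace (S (S k) - 1)%nat with (S k) in D by lia.
        rewrite (IH2 ltac:(lia)) in D.
        unfold Sp. change (sum_lt (S (S (S k))) RS) with (sum_lt (S (S k)) RS + RS (S (S k))).
        unfold Sp, RS in *. fold a in D. lra. }
    split; [apply G_to_w; auto|auto].
Qed.

Lemma R_last : (1 <= m)%nat -> Rj lam d I x (m - 1) = lam * (1 - INR d * wsum I x (m - 1)).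
Proof. intros H. rewrite (Rj_low lam d I x m HS) by lia. apply Rmax_right.
  destruct (chain (m-1) ltac:(lia)). pose proof (S_lam lam d I x m HS). nra. Qed.

Lemma G_last : (2 <= m)%nat -> Gj lam d I x (m - 1) = a * Sp (m - 1).
Proof. intros H. apply (chain (m-1)); lia. Qed.

End S.

Section S.
Variables (lam : R) (d I : nat) (x : nat -> nat -> R) (m : nat).
Hypothesis HS : Setup lam d I x m.

Lemma rowsum_single i p : (i <= p)%nat -> (p <= I)%nat ->
  (forall k, (i <= k)%nat -> (k <= I)%nat -> k <> p -> x i k = 0) -> rowsum I x i = x i p.
Proof. intros H1 H2 H. unfold rowsum, sumR.
  rewrite (sl_ext _ _ (fun k => if Nat.eqb k p then x i p else 0)). apply sl_delta; lia.
  intros k Hk. destruct (Nat.leb_spec i k); destruct (Nat.eqb_spec k p); subst; auto. apply H; lia. lia. Qed.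

Lemma high_zero_n : forall n j, (I - j <= n)%nat -> (m + 2 <= j)%nat -> (j <= I)%nat ->
  forall i, (i <= j)%nat -> x i j = 0.
Proof.
  pose proof (S_a lam d I x m HS) as Ha.
  induction n as [|n IH]; intros j Hn Hj1 Hj2.
  all: assert (IHc : forall j', (j < j')%nat -> (j' <= I)%nat -> forall i, (i <= j')%nat -> x i j' = 0)
    by (intros j' h1 h2; match goal with
        | IH : forall j, _ |- _ => apply IH; lia
        | _ => lia end).
  all: assert (Hjj : x j j = 0) by (
    destruct (Nat.eq_dec j I) as [e|e];
    [ subst j; pose proof (S_drift lam d I x m HS I I ltac:(lia) ltac:(lia)) as D;
      rewrite drift_II in D by lia;
      rewrite (rho_high lam d I x m HS (I-2)) in D by lia;
      rewrite (rho_high lam d I x m HS (I-1)) in D by lia;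
      rewrite (Gj_high lam d I x m HS (I-1)) in D by lia; lra
    | pose proof (S_drift lam d I x m HS j j ltac:(lia) ltac:(lia)) as D;
      rewrite drift_ii in D by lia;
      rewrite (rho_high lam d I x m HS (j-1)) in D by lia;
      rewrite (rho_high lam d I x m HS (j-2)) in D by lia;
      rewrite (Gj_high lam d I x m HS (j-1)) in D by lia;
      rewrite (Gj_high lam d I x m HS j) in D by lia;
      rewrite (rowsum_single j j) in D by (try lia; intros k h1 h2 h3; apply (IHc k); lia);
      lra ]).
  all: assert (Hdown : forall t, (t <= j)%nat -> x (j - t)%nat j = 0) by (
    induction t as [|t IHt]; intros Ht;
    [ rewrite Nat.sub_0_r; exact Hjj
    | pose proof (S_drift lam d I x m HS (j - S t) j ltac:(lia) ltac:(lia)) as D;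
      rewrite drift_off in D by lia;
      rewrite (rho_high lam d I x m HS (j-1)) in D by lia;
      rewrite (rho_high lam d I x m HS (j-2)) in D by lia;
      rewrite (rho_high lam d I x m HS (I-1)) in D by lia;
      replace (S (j - S t)) with (j - t)%nat in D by lia;
      rewrite IHt in D by lia;
      pose proof (S_nn lam d I x m HS (j - S t) j ltac:(lia) ltac:(lia));
      destruct (Nat.ltb 0 (j - S t)); destruct (andb _ _); nra ]).
  all: intros i Hi; replace i with (j - (j - i))%nat by lia; apply Hdown; lia.
Qed.

Lemma high_zero j i : (m + 2 <= j)%nat -> (j <= I)%nat -> (i <= j)%nat -> x i j = 0.
Proof. intros. apply (high_zero_n (I - j) j); lia. Qed.

End S.

Lemma G0 n (X u : nat -> R) a c :
  (forall i, (i < n)%nat -> X (S i) = (if Nat.ltb 0 i then X i - c * u (i - 1)%nat else 0) + a * X i + c * u i) ->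
  forall j, (j < n)%nat -> X (S j) = a * sum_lt (S j) X + c * u j.
Proof. intros H. induction j as [|j IH]; intros Hj.
  - rewrite H by lia. simpl. ring.
  - rewrite H by lia. rewrite (proj2 (Nat.ltb_lt 0 (S j))) by lia. replace (S j - 1)%nat with j by lia. rewrite IH by lia.
    change (sum_lt (S (S j)) X) with (sum_lt (S j) X + X (S j)). rewrite IH by lia. ring. Qed.

Lemma G1 n (X u : nat -> R) a c :
  (forall j, (j < n)%nat -> X (S j) = a * sum_lt (S j) X + c * u j) ->
  forall k, (k <= n)%nat -> sum_lt (S k) X = X 0%nat + a * sum_lt k (fun j => sum_lt (S j) X) + c * sum_lt k u.
Proof. intros H. induction k as [|k IH]; intros Hk.
  - simpl. ring.
  - change (sum_lt (S (S k)) X) with (sum_lt (S k) X + X (S k)). rewrite IH by lia. rewrite H by lia.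
    change (sum_lt (S k) (fun j => sum_lt (S j) X)) with (sum_lt k (fun j => sum_lt (S j) X) + sum_lt (S k) X).
    change (sum_lt (S k) u) with (sum_lt k u + u k). rewrite IH by lia. ring. Qed.

Lemma G2 n (X u : nat -> R) a c : 0 < a -> 0 <= c -> (forall k, 0 <= u k) -> 0 <= X 0%nat ->
  (forall j, (j < n)%nat -> X (S j) = a * sum_lt (S j) X + c * u j) ->
  forall k, (k <= n)%nat -> (1 + a) ^ k * X 0%nat <= sum_lt (S k) X.
Proof. intros Ha Hc Hu HX H. induction k as [|k IH]; intros Hk.
  - simpl. lra.
  - change (sum_lt (S (S k)) X) with (sum_lt (S k) X + X (S k)). rewrite H by lia.
    specialize (IH ltac:(lia)). pose proof (Hu k).
    assert (0 <= c * u k) by (apply Rmult_le_pos; auto).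
    assert (0 <= (1 + a) * (sum_lt (S k) X - (1+a)^k * X 0%nat)) by (apply Rmult_le_pos; lra).
    change ((1 + a) ^ S k) with ((1+a) * (1+a)^k). rewrite Rmult_assoc.
    set (t := (1+a)^k * X 0%nat) in *. set (s := sum_lt (S k) X) in *. nra. Qed.

Section S.
Variables (lam : R) (d I : nat) (x : nat -> nat -> R) (m : nat).
Hypothesis HS : Setup lam d I x m.
Hypothesis HmI : (m < I)%nat.

Let a := lam * INR d.
Let c := Rj lam d I x (m - 1) * / colsum x m.
Let u := fun i => x i m.
Let v := fun i => x i (S m).
Let X := fun i => rowsum I x i.
Let Sp := fun k => sum_lt (S k) X.

Lemma X_low i : (i <= m)%nat -> X i = u i + v i.
Proof. intros Hi. unfold X, rowsum, sumR.
  rewrite (sl_ext _ _ (fun k => (if Nat.eqb k m then u i else 0) + (if Nat.eqb k (S m) then v i else 0))).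
  rewrite sl_plus, !sl_delta by lia. reflexivity.
  intros k Hk. destruct (Nat.eqb_spec k m) as [e|e]; destruct (Nat.eqb_spec k (S m)) as [e'|e']; try lia.
  - rewrite e. destruct (Nat.leb_spec i m); [unfold u; ring|lia].
  - rewrite e'. destruct (Nat.leb_spec i (S m)); [unfold v; ring|lia].
  - destruct (Nat.leb_spec i k); [|ring].
    destruct (Nat.lt_ge_cases k m).
    + rewrite (S_colz lam d I x m HS k i) by lia. ring.
    + rewrite (high_zero lam d I x m HS k i) by lia. ring.
Qed.

Lemma X_mid : X (S m) = v (S m).
Proof. unfold X. apply (rowsum_single I x); try lia.
  intros k h1 h2 h3. apply (high_zero lam d I x m HS); lia. Qed.

Lemma X_high i : (S m < i)%nat -> X i = 0.
Proof. intros Hi. unfold X, rowsum, sumR. apply sl_zero. intros k Hk.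
  destruct (Nat.leb_spec i k); [|reflexivity]. apply (high_zero lam d I x m HS); lia. Qed.

Lemma Sp_high k : (S m <= k)%nat -> Sp k = Sp (S m).
Proof. intros H. unfold Sp. replace (S k) with (S (S m) + (k - S m))%nat by lia.
  rewrite sl_add. rewrite (sl_zero (k - S m)). ring. intros; apply X_high; lia. Qed.

Lemma total : Sp I = 1.
Proof. pose proof (S_fp lam d I x m HS) as [[_ H] _]. rewrite sumR_0 in H. exact H. Qed.

Lemma Sp_Sm : Sp (S m) = 1.
Proof. rewrite <- (Sp_high I) by lia. apply total. Qed.

Lemma Sp_m1 : Sp m + v (S m) = 1.
Proof. rewrite <- Sp_Sm. unfold Sp. change (sum_lt (S (S m)) X) with (sum_lt (S m) X + X (S m)). rewrite X_mid. ring. Qed.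

Let U := colsum x m.
Let V := colsum x (S m).

Lemma U_eq : U = sum_lt (S m) u.
Proof. unfold U, colsum. rewrite sumR_0. reflexivity. Qed.
Lemma V_eq : V = sum_lt (S (S m)) v.
Proof. unfold V, colsum. rewrite sumR_0. reflexivity. Qed.

Lemma UV : U + V = 1.
Proof. rewrite <- Sp_Sm. unfold Sp. change (sum_lt (S (S m)) X) with (sum_lt (S m) X + X (S m)).
  rewrite X_mid, (sl_ext (S m) X (fun i => u i + v i)) by (intros; apply X_low; lia).
  rewrite sl_plus, U_eq, V_eq. change (sum_lt (S (S m)) v) with (sum_lt (S m) v + v (S m)). ring. Qed.

Lemma V_nonneg : 0 <= V.
Proof. unfold V. apply (colsum_nonneg lam d I x). apply (S_fp lam d I x m HS). lia. Qed.

Lemma LM_eq : LM I x = INR m * U + INR (S m) * V.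
Proof. unfold LM. rewrite sumR_low by (intros k Hk; replace k with 0%nat by lia; simpl; ring).
  rewrite (sl_ext _ _ (fun j => (if Nat.eqb j m then INR m * U else 0) + (if Nat.eqb j (S m) then INR (S m) * V else 0))).
  rewrite sl_plus, !sl_delta by lia. reflexivity.
  intros k Hk. destruct (Nat.eqb_spec k m) as [e|e]; destruct (Nat.eqb_spec k (S m)) as [e'|e']; try lia.
  - rewrite e. unfold U. ring.
  - rewrite e'. unfold V. ring.
  - destruct (Nat.lt_ge_cases k m).
    + rewrite (colsum_low lam d I x m HS k) by lia. ring.
    + unfold colsum. rewrite sumR_0, sl_zero. ring. intros i Hi. apply (high_zero lam d I x m HS); lia.
Qed.

Lemma LS_eq : LS I x = INR m + 1 - sum_lt m Sp - Sp m.
Proof. unfold LS. rewrite sumR_low by (intros k Hk; replace k with 0%nat by lia; simpl; ring).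
  rewrite (sl_ext _ _ (fun i => INR (S I) * X i - (INR (S I) - INR i) * X i)) by (intros; unfold X; ring).
  rewrite sl_minus, sl_scal, sl_weight. fold (Sp I). rewrite total.
  replace (S I) with (S m + (I - m))%nat by lia. rewrite sl_add.
  rewrite (sl_ext (I - m) _ (fun _ => 1)).
  2:{ intros t Ht. fold (Sp (S m + t)%nat). rewrite Sp_high by lia. apply Sp_Sm. }
  rewrite sl_const. change (sum_lt (S m) (fun j => sum_lt (S j) X)) with (sum_lt m Sp + Sp m).
  rewrite plus_INR, minus_INR by lia. rewrite S_INR. ring. Qed.


Lemma C1 i : (1 <= m)%nat -> (i < m)%nat -> u (S i) = (if Nat.ltb 0 i then u i else 0) + (a + c) * u i.
Proof. intros H1 H2. pose proof (S_drift lam d I x m HS i m ltac:(lia) ltac:(lia)) as D.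
  rewrite drift_off in D by lia. rewrite (rho_m lam d I x m HS (m-1) i) in D.
  rewrite (rho_low lam d I x m HS (m-2) (i-1) (m-1)) in D by lia.
  rewrite (proj2 (Nat.eqb_neq m I)) in D by lia. simpl andb in D.
  unfold u, c, a. destruct (Nat.ltb 0 i); lra. Qed.

Lemma C2 i : (i <= m)%nat -> v (S i) = (if Nat.ltb 0 i then v i - c * u (i - 1)%nat else 0) + a * v i.
Proof. intros H1. pose proof (S_drift lam d I x m HS i (S m) ltac:(lia) ltac:(lia)) as D.
  rewrite drift_off in D by lia.
  replace (S m - 1)%nat with m in D by lia.
  rewrite (rho_high lam d I x m HS m) in D by lia.
  rewrite (rho_high lam d I x m HS (I-1)) in D by lia.
  destruct i as [|i].
  - replace (Nat.ltb 0 0) with false in * by reflexivity. rewrite Bool.andb_false_r in D. unfold v, a. lra.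
  - rewrite (proj2 (Nat.ltb_lt 0 (S i))) in D |- * by lia.
    replace (S m - 2)%nat with (m - 1)%nat in D by lia. replace (S i - 1)%nat with i in D |- * by lia.
    rewrite (rho_m lam d I x m HS (m-1) i) in D.
    unfold u, v, c, a. destruct (andb _ _); lra. Qed.

Lemma wsum0 : wsum I x 0 = X 0.
Proof. rewrite (wsum_eq I x). simpl. unfold X. ring. Qed.

Lemma C3 : (1 <= m)%nat -> (1 + c) * u m = a * (Sp (m - 1) + v m).
Proof. intros H1.
  pose proof (R_last lam d I x m HS H1) as HR.
  destruct (Nat.eq_dec m 1) as [e|e].
  - pose proof (S_drift lam d I x m HS 1 1 ltac:(lia) ltac:(lia)) as D.
    rewrite drift_11 in D by lia.
    rewrite (Gj_high lam d I x m HS 1) in D by lia.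
    assert (HR0 : Rj lam d I x 0 = lam * (1 - INR d * X 0)).
    { replace (m - 1)%nat with 0%nat in HR by lia. rewrite HR, wsum0. reflexivity. }
    rewrite HR0 in D.
    assert (Hc : c = Rj lam d I x 0 * / colsum x m) by (unfold c; replace (m-1)%nat with 0%nat by lia; reflexivity).
    assert (Hr : rho lam d I x 0 1 1 = c * u m).
    { pose proof (rho_m lam d I x m HS 0 m) as T. rewrite e in T. rewrite Hc. unfold u. rewrite e, T. ring. }
    rewrite Hr in D.
    assert (Hx : rowsum I x 1 = u m + v m) by (pose proof (X_low m ltac:(lia)) as T; unfold X in T; rewrite e in T |- *; exact T).
    rewrite Hx in D.
    replace (x 1%nat 1%nat) with (u m) in D by (unfold u; rewrite e; reflexivity).
    replace (m - 1)%nat with 0%nat by lia. unfold Sp. simpl sum_lt.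
    unfold a. nra.
  - pose proof (S_drift lam d I x m HS m m ltac:(lia) ltac:(lia)) as D.
    rewrite drift_ii in D by lia.
    rewrite (rho_m lam d I x m HS (m-1) m) in D.
    rewrite (rho_low lam d I x m HS (m-2) (m-1) (m-1)) in D by lia.
    rewrite (G_last lam d I x m HS) in D by lia.
    rewrite (Gj_high lam d I x m HS m) in D by lia.
    assert (Hx : rowsum I x m = u m + v m) by (apply X_low; lia). rewrite Hx in D.
    unfold Sp, a, c, u in *. unfold X. nra.
Qed.

Lemma C4 : (1 <= m)%nat -> v (S m) = c * u m.
Proof. intros H1. destruct (Nat.eq_dec (S m) I) as [e|e].
  - pose proof (S_drift lam d I x m HS I I ltac:(lia) ltac:(lia)) as D.
    rewrite drift_II in D by lia.
    replace (I - 2)%nat with (m - 1)%nat in D by lia. replace (I - 1)%nat with m in D by lia.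
    rewrite (rho_m lam d I x m HS (m-1) m) in D.
    rewrite (rho_high lam d I x m HS m) in D by lia.
    rewrite (Gj_high lam d I x m HS m) in D by lia.
    replace (x I I) with (v (S m)) in D by (unfold v; rewrite e; reflexivity).
    unfold c, u. lra.
  - pose proof (S_drift lam d I x m HS (S m) (S m) ltac:(lia) ltac:(lia)) as D.
    rewrite drift_ii in D by lia.
    replace (S m - 1)%nat with m in D by lia. replace (S m - 2)%nat with (m - 1)%nat in D by lia.
    rewrite (rho_m lam d I x m HS (m-1) m) in D.
    rewrite (rho_high lam d I x m HS m) in D by lia.
    rewrite (Gj_high lam d I x m HS m) in D by lia.
    rewrite (Gj_high lam d I x m HS (S m)) in D by lia.
    assert (Hx : rowsum I x (S m) = v (S m)) by apply X_mid. rewrite Hx in D.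
    unfold v, c, u in *. lra.
Qed.

Lemma C5 : m = 0%nat -> a * v 0%nat = lam.
Proof. intros e. pose proof (S_drift lam d I x m HS 0 0 ltac:(lia) ltac:(lia)) as D.
  rewrite drift_00 in D. rewrite (Rj_high lam d I x m HS 0) in D by lia.
  assert (Hx : rowsum I x 0 = u 0%nat + v 0%nat) by (apply X_low; lia). rewrite Hx in D.
  replace (x 0%nat 0%nat) with (u 0%nat) in D by (unfold u; rewrite e; reflexivity).
  unfold a. lra. Qed.


Lemma F1 : (1 <= m)%nat -> forall j, (j < m)%nat -> X (S j) = a * Sp j + c * u j.
Proof. intros H1. apply (G0 m X u a c). intros i Hi.
  rewrite (X_low (S i)) by lia. rewrite (X_low i) by lia. rewrite C1 by lia. rewrite C2 by lia.
  destruct (Nat.ltb 0 i); ring. Qed.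

Lemma Zl : (1 <= m)%nat -> forall k, (1 <= k)%nat -> (k <= m)%nat ->
  Sp k - u k = (1 + a) ^ (k - 1) * ((1 + a) * v 0%nat + u 0%nat).
Proof. intros H1. induction k as [|k IH]; intros Hk1 Hk2; [lia|].
  destruct k as [|k].
  - unfold Sp. change (sum_lt 2 X) with (0 + X 0%nat + X 1%nat).
    rewrite (X_low 0) by lia. rewrite (X_low 1) by lia. rewrite (C2 0) by lia.
    replace (Nat.ltb 0 0) with false by reflexivity. simpl. ring.
  - specialize (IH ltac:(lia) ltac:(lia)).
    unfold Sp. change (sum_lt (S (S (S k))) X) with (sum_lt (S (S k)) X + X (S (S k))).
    rewrite (F1 H1 (S k)) by lia. rewrite (C1 (S k)) by lia.
    rewrite (proj2 (Nat.ltb_lt 0 (S k))) by lia.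
    replace (S (S k) - 1)%nat with (S k) by lia. replace (S k - 1)%nat with k in IH by lia.
    change ((1+a)^(S k)) with ((1+a) * (1+a)^k). unfold Sp in IH.
    replace ((1 + a) * (1 + a) ^ k * ((1 + a) * v 0%nat + u 0%nat)) with ((1+a) * ((1 + a) ^ k * ((1 + a) * v 0%nat + u 0%nat))) by ring.
    rewrite <- IH. unfold Sp. ring. Qed.

Lemma Tl : (1 <= m)%nat -> forall k, (1 <= k)%nat -> (k <= m)%nat ->
  (a + c) * sum_lt (S k) u = (1 + a + c) * u k.
Proof. intros H1. induction k as [|k IH]; intros Hk1 Hk2; [lia|].
  destruct k as [|k].
  - change (sum_lt 2 u) with (0 + u 0%nat + u 1%nat). rewrite (C1 0) by lia.
    replace (Nat.ltb 0 0) with false by reflexivity. ring.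
  - specialize (IH ltac:(lia) ltac:(lia)).
    change (sum_lt (S (S (S k))) u) with (sum_lt (S (S k)) u + u (S (S k))).
    rewrite (C1 (S k)) by lia. rewrite (proj2 (Nat.ltb_lt 0 (S k))) by lia.
    rewrite Rmult_plus_distr_l, IH. ring. Qed.

Lemma u_zero_prop : u 0%nat = 0 -> forall k, (k <= m)%nat -> u k = 0.
Proof. intros H0. induction k as [|k IH]; intros Hk; auto.
  rewrite C1 by lia. rewrite IH by lia. destruct (Nat.ltb 0 k); ring. Qed.

Lemma main_lt : LS I x = INR m + V - 1 / INR d /\ LM I x = LS I x + 1 / INR d /\ 0 <= V <= 1 /\ (1 + a) ^ m * (1 - lam) <= 1 /\ 1 < (1 + a) ^ (S m) * (1 - lam).
Proof.
  pose proof (S_a lam d I x m HS) as Ha. fold a in Ha.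
  pose proof (S_dpos lam d I x m HS) as Hd.
  pose proof (S_lam lam d I x m HS) as Hl.
  pose proof (S_U lam d I x m HS) as HU. fold U in HU.
  pose proof V_nonneg as HV. fold V in HV.
  pose proof UV as HUV. pose proof LS_eq as HLS. pose proof LM_eq as HLM.
  pose proof (S_nn lam d I x m HS 0 (S m) ltac:(lia) ltac:(lia)) as Hv0. fold (v 0%nat) in Hv0.
  assert (K : X 0%nat = 1 - lam /\ (1 + a) ^ m * ((1 + a) * v 0%nat + u 0%nat) = 1 /\ 0 < u 0%nat /\ LS I x = INR m + V - 1 / INR d).
  { destruct (Nat.eq_dec m 0) as [e|e].
    - pose proof (C5 e) as H5. pose proof (C2 0 ltac:(lia)) as H2.
      replace (Nat.ltb 0 0) with false in H2 by reflexivity.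
      pose proof Sp_m1 as Hs. pose proof (X_low 0 ltac:(lia)) as Hx0. pose proof U_eq as HUe.
      assert (Sp m = X 0%nat) by (unfold Sp; rewrite e; simpl; ring).
      assert (sum_lt m Sp = 0) by (rewrite e; reflexivity).
      assert (sum_lt (S m) u = u 0%nat) by (rewrite e; simpl; ring).
      assert (v (S m) = v 1%nat) by (rewrite e; reflexivity).
      assert (INR m = 0) by (rewrite e; reflexivity).
      rewrite e. simpl pow.
      assert (v 0%nat = 1 / INR d).
      { apply (Rmult_eq_reg_l (lam * INR d)); [unfold a in H5; rewrite H5; field; lra | nra]. }
      split; [|split; [|split]]; [lra|lra|lra|]. rewrite HLS. rewrite H, H0. change (INR 0) with 0. lra.
    - assert (H1 : (1 <= m)%nat) by lia.
      pose proof (G1 m X u a c (F1 H1) m ltac:(lia)) as HG. fold (Sp m) in HG.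
      pose proof (R_last lam d I x m HS H1) as HR.
      rewrite (wsum_eq I x) in HR. replace (S (m - 1)) with m in HR by lia.
      assert (HcU : c * U = Rj lam d I x (m - 1)) by (unfold c; fold U; field; lra).
      pose proof Sp_m1 as Hs. pose proof (C4 H1) as H4. pose proof (C3 H1) as H3.
      pose proof U_eq as HUe. change (sum_lt (S m) u) with (sum_lt m u + u m) in HUe.
      assert (HSm : Sp m = Sp (m - 1) + u m + v m).
      { assert (T : Sp (S (m-1)) = Sp (m-1) + X (S (m-1))) by reflexivity.
        replace (S (m-1)) with m in T by lia. rewrite T, X_low by lia. ring. }
      assert (HX0 : X 0%nat = 1 - lam).
      { unfold Sp in HR. unfold a in HG.
        assert (Hw : sum_lt m (fun j => sum_lt (S j) (fun i => rowsum I x i)) = sum_lt m Sp) by reflexivity.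
        rewrite Hw in HR.
        assert (Hw2 : sum_lt m (fun j => sum_lt (S j) X) = sum_lt m Sp) by reflexivity. rewrite Hw2 in HG.
        assert (c * U = c * sum_lt m u + c * u m) by (rewrite HUe; ring). lra. }
      pose proof (Zl H1 m H1 (le_n m)) as HZ.
      pose proof (Tl H1 m H1 (le_n m)) as HT. rewrite <- U_eq in HT. fold U in HT.
      assert (Hc0 : 0 <= c) by (unfold c; apply Rmult_le_pos; [apply (Rj_nonneg lam d I x)|left; apply Rinv_0_lt_compat; exact HU]).
      assert (Hst : (1 + a) * (Sp m - u m) = 1) by nra.
      split; [exact HX0|split; [|split]].
      + replace m with (S (m - 1)) at 1 by lia. simpl pow. rewrite Rmult_assoc, <- HZ. lra.
      + pose proof (S_nn lam d I x m HS 0 m ltac:(lia) ltac:(lia)) as Hu0. fold (u 0%nat) in Hu0.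
        destruct Hu0 as [Hu0|Hu0]; auto. exfalso.
        assert (sum_lt (S m) u = 0) by (apply sl_zero; intros; apply u_zero_prop; auto; lia).
        rewrite U_eq in HU. lra.
      + rewrite HLS. unfold Sp in HR. 
        assert (Hw : sum_lt m (fun j => sum_lt (S j) (fun i => rowsum I x i)) = sum_lt m Sp) by reflexivity.
        rewrite Hw in HR.
        assert (E1 : a * (sum_lt m Sp + Sp m) = lam + a * U).
        { unfold a in *. nra. }
        assert (E2 : sum_lt m Sp + Sp m = 1 / INR d + U).
        { apply (Rmult_eq_reg_l a); [|lra]. rewrite E1. unfold a. field. lra. }
        lra. }
  destruct K as [K1 [K2 [K3 K4]]].
  pose proof (X_low 0 ltac:(lia)) as Hx0.
  assert (Hp : 0 < (1 + a) ^ m) by (apply pow_lt; lra).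
  split; [exact K4|split; [|split; [lra|split]]].
  - rewrite HLM, K4. replace (INR (S m)) with (INR m + 1) by (rewrite S_INR; ring).
    replace U with (1 - V) by lra. ring.
  - rewrite <- K1, Hx0.
    assert ((1+a)^m*(u 0%nat + v 0%nat) <= (1+a)^m*((1+a) * v 0%nat + u 0%nat)) by (apply Rmult_le_compat_l; nra). lra.
  - rewrite <- K1, Hx0.
    assert (E : (1+a)^(S m) * (u 0%nat + v 0%nat) = (1+a)^m*((1+a) * v 0%nat + u 0%nat) + a * ((1+a)^m * u 0%nat)) by (simpl; ring).
    assert (0 < a * ((1+a)^m * u 0%nat)) by (apply Rmult_lt_0_compat; [lra|apply Rmult_lt_0_compat; lra]). lra.
Qed.

End S.

Section S.
Variables (lam : R) (d I : nat) (x : nat -> nat -> R) (m : nat).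
Hypothesis HS : Setup lam d I x m.
Hypothesis HmI : m = I.

Let a := lam * INR d.
Let c := Rj lam d I x (m - 1) * / colsum x m.
Let u := fun i => x i m.

Lemma XI i : (i <= I)%nat -> rowsum I x i = u i.
Proof. intros Hi. unfold u. apply (rowsum_single I x); try lia.
  intros k h1 h2 h3. apply (S_colz lam d I x m HS); lia. Qed.

Lemma CI i : (i < m)%nat -> u (S i) = (if Nat.ltb 0 i then u i - c * u (i - 1)%nat else 0) + a * u i + c * u i.
Proof. intros Hi. pose proof (S_drift lam d I x m HS i m ltac:(lia) ltac:(lia)) as D.
  rewrite drift_off in D by lia.
  rewrite (rho_m lam d I x m HS (m-1) i) in D.
  rewrite (rho_low lam d I x m HS (m-2) (i-1) (m-1)) in D by lia.
  replace (rho lam d I x (I-1) (i-1) I) with (rho lam d I x (m-1) (i-1) m) in D by (rewrite HmI; reflexivity).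
  rewrite (rho_m lam d I x m HS (m-1) (i-1)) in D.
  rewrite (proj2 (Nat.eqb_eq m I)) in D by exact HmI. simpl andb in D.
  unfold u, c, a. destruct (Nat.ltb 0 i); lra. Qed.

Lemma main_eq : (1 + a) ^ m * (1 - lam) <= 1.
Proof.
  pose proof (S_a lam d I x m HS) as Ha. fold a in Ha.
  pose proof (S_dpos lam d I x m HS) as Hd.
  pose proof (S_lam lam d I x m HS) as Hl.
  pose proof (S_U lam d I x m HS) as HU.
  pose proof (S_I lam d I x m HS) as HI.
  assert (Hc0 : 0 <= c) by (unfold c; apply Rmult_le_pos; [apply (Rj_nonneg lam d I x)|left; apply Rinv_0_lt_compat; exact HU]).
  assert (Hu : forall k, (k <= m)%nat -> 0 <= u k) by (intros; apply (S_nn lam d I x m HS); lia).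
  pose proof (G0 m u u a c CI) as F.
  assert (Ucol : colsum x m = sum_lt (S m) u) by (unfold colsum; rewrite sumR_0; reflexivity).
  assert (Utot : sum_lt (S m) u = 1).
  { pose proof (S_fp lam d I x m HS) as [[_ H] _]. rewrite sumR_0 in H. rewrite <- H.
    rewrite HmI. apply sl_ext. intros; symmetry; apply XI; lia. }
  set (u' := fun k => if Nat.leb k m then u k else 0).
  assert (F' : forall j, (j < m)%nat -> u (S j) = a * sum_lt (S j) u + c * u' j).
  { intros j Hj. rewrite F by lia. unfold u'. destruct (Nat.leb_spec j m); [reflexivity|lia]. }
  pose proof (G2 m u u' a c Ha Hc0 ltac:(intros k; unfold u'; destruct (Nat.leb_spec k m); [apply Hu; lia|lra])
     (Hu 0%nat ltac:(lia)) F' m (le_n m)) as HG2.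
  pose proof (G1 m u u a c F m (le_n m)) as HG1.
  pose proof (R_last lam d I x m HS ltac:(lia)) as HR.
  rewrite (wsum_eq I x) in HR. replace (S (m - 1)) with m in HR by lia.
  assert (Hw : sum_lt m (fun j => sum_lt (S j) (fun i => rowsum I x i)) = sum_lt m (fun j => sum_lt (S j) u)).
  { apply sl_ext. intros j Hj. apply sl_ext. intros i Hi. apply XI. lia. }
  rewrite Hw in HR.
  assert (HcU : c = Rj lam d I x (m - 1)) by (unfold c; rewrite Ucol, Utot; field).
  change (sum_lt (S m) u) with (sum_lt m u + u m) in Utot.
  assert (Hum : 0 <= c * u m) by (apply Rmult_le_pos; auto).
  assert (Hu0 : u 0%nat >= 1 - lam).
  { change (sum_lt (S m) u) with (sum_lt m u + u m) in HG1. unfold a in HG1. 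
    assert (c * sum_lt m u = c - c * u m) by (replace (sum_lt m u) with (1 - u m) by lra; ring). lra. }
  assert (Hp : 0 < (1 + a) ^ m) by (apply pow_lt; lra).
  assert ((1+a)^m * (1 - lam) <= (1+a)^m * u 0%nat) by (apply Rmult_le_compat_l; lra).
  change (sum_lt (S m) u) with (sum_lt m u + u m) in HG2. lra.
Qed.

End S.

Lemma ln_le' x y : 0 < x -> x <= y -> ln x <= ln y.
Proof. intros H1 [H2|H2]. left; apply ln_increasing; auto. subst; lra. Qed.

Lemma js_eq lam d m : 0 < lam -> lam < 1 -> 0 < lam * INR d ->
  (1 + lam * INR d) ^ m * (1 - lam) <= 1 -> 1 < (1 + lam * INR d) ^ (S m) * (1 - lam) ->
  jstar lam d = Z.of_nat m.
Proof. intros H1 H2 Ha Hle Hlt. unfold jstar. symmetry. apply Int_part_spec.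
  rewrite <- INR_IZR_INZ.
  set (q := 1 + lam * INR d) in *. replace (lam * INR d + 1) with q by (unfold q; ring).
  assert (Hq : 0 < ln q) by (rewrite <- ln_1; apply ln_increasing; unfold q; lra).
  assert (Hqp : 0 < q) by (unfold q; lra).
  assert (Hl1 : 0 < 1 - lam) by lra.
  pose proof (ln_le' _ _ (Rmult_lt_0_compat _ _ (pow_lt q m Hqp) Hl1) Hle) as L1.
  rewrite ln_1, ln_mult, ln_pow in L1 by (try apply pow_lt; lra).
  assert (L2 : ln 1 < ln (q ^ S m * (1 - lam))) by (apply ln_increasing; lra).
  rewrite ln_1, ln_mult, ln_pow in L2 by (try apply pow_lt; lra). rewrite S_INR in L2.
  set (r := - ln (1 - lam) / ln q).
  assert (E : r * ln q = - ln (1 - lam)) by (unfold r; field; lra).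
  split.
  - apply (Rmult_lt_reg_r (ln q)); auto. rewrite Rmult_minus_distr_r, E. lra.
  - apply (Rmult_le_reg_r (ln q)); auto. rewrite E. lra.
Qed.

Lemma js_lt lam d I : 0 < lam -> lam < 1 -> 0 < lam * INR d ->
  (Z.of_nat I > jstar lam d)%Z -> 1 < (1 + lam * INR d) ^ I * (1 - lam).
Proof. intros H1 H2 Ha HI. unfold jstar in HI.
  set (q := 1 + lam * INR d) in *. replace (lam * INR d + 1) with q in HI by (unfold q; ring).
  set (r := - ln (1 - lam) / ln q) in *.
  pose proof (base_Int_part r) as [B1 B2].
  assert (HZ : (Int_part r + 1 <= Z.of_nat I)%Z) by lia.
  apply IZR_le in HZ. rewrite plus_IZR, <- INR_IZR_INZ in HZ.
  assert (Hr : r < INR I) by lra.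
  assert (Hq : 0 < ln q) by (rewrite <- ln_1; apply ln_increasing; unfold q; lra).
  assert (Hqp : 0 < q) by (unfold q; lra).
  assert (Hl1 : 0 < 1 - lam) by lra.
  assert (Hr2 : - ln (1 - lam) < INR I * ln q).
  { assert (E : r * ln q = - ln (1 - lam)) by (unfold r; field; lra).
    apply (Rmult_lt_compat_r (ln q)) in Hr; auto. lra. }
  apply ln_lt_inv; [lra|apply Rmult_lt_0_compat; [apply pow_lt|]; lra|].
  rewrite ln_1, ln_mult, ln_pow by (try apply pow_lt; lra). lra.
Qed.

Lemma min_ex (P : nat -> Prop) n : P n -> exists m, P m /\ forall k, (k < m)%nat -> ~ P k.
Proof. revert P. induction n as [n IH] using lt_wf_ind. intros P Hn.
  destruct (classic (exists k, (k < n)%nat /\ P k)) as [[k [Hk Pk]]|H].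
  - exact (IH k Hk P Pk).
  - exists n. split; auto. intros k Hk Pk. apply H. eauto. Qed.

Theorem proposition2 (lam : R) (d I : nat) (x : nat -> nat -> R) :
  0 < lam -> lam < 1 -> (2 <= d)%nat -> (1 < I)%nat ->
  (Z.of_nat I > jstar lam d)%Z ->
  fixed_point lam d I x ->
  LM I x = LS I x + 1 / INR d /\
  IZR (jstar lam d) - 1 / INR d <= LS I x /\
  LS I x <= IZR (jstar lam d) - 1 / INR d + 1.
Proof.
  intros Hl Hl1 Hd HI Hjs Hfp.
  pose proof (fp_nonneg _ _ _ _ Hfp) as Hnn.
  assert (Ha : 0 < lam * INR d) by (apply Rmult_lt_0_compat; [lra|apply lt_0_INR; lia]).
  set (P := fun j => (j <= I)%nat /\ exists i, (i <= j)%nat /\ x i j <> 0).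
  assert (HP : exists j, P j).
  { apply NNPP. intros Hn. pose proof Hfp as [[_ Ht] _].
    assert (sumR 0 I (fun i => sumR i I (fun j => x i j)) = 0).
    { rewrite sumR_0. apply sl_zero. intros i Hi. unfold sumR. apply sl_zero. intros k Hk.
      destruct (Nat.leb_spec i k); auto. apply NNPP. intros Hx. apply Hn. exists k. split; [lia|eauto]. }
    lra. }
  destruct HP as [j0 Hj0]. destruct (min_ex P j0 Hj0) as [m [[HmI [i0 [Hi0 Hx0]]] Hmin]].
  assert (HS : Setup lam d I x m).
  { unfold Setup. refine (conj Hl (conj Hl1 (conj Hd (conj HI (conj Hfp (conj HmI (conj _ _))))))).
    - intros j i Hj Hi. apply NNPP. intros Hx. apply (Hmin j Hj). split; [lia|eauto].
    - unfold colsum. rewrite sumR_0.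
      assert (0 <= x i0 m) by (apply Hnn; lia).
      assert (x i0 m <= sum_lt (S m) (fun i => x i m)) by (apply (sl_ge_term (S m) (fun i => x i m) i0); [intros; apply Hnn; lia|lia]).
      lra. }
  destruct (Nat.eq_dec m I) as [e|e].
  - exfalso. pose proof (main_eq lam d I x m HS e) as H1. pose proof (js_lt lam d I Hl Hl1 Ha Hjs) as H2.
    rewrite e in H1. lra.
  - destruct (main_lt lam d I x m HS ltac:(lia)) as [K1 [K2 [K3 [K4 K5]]]].
    rewrite (js_eq lam d m Hl Hl1 Ha K4 K5). rewrite <- INR_IZR_INZ.
    split; [exact K2|]. lra.
Qed.
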